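(* Let $1\le d\le n$ be integers with $\gcd(n,d)=1$, and let $2^a$ be the largest power of $2$ dividing $n$. Then $(n,d)$ is a critical pair if and only if $d^2\equiv1\pmod n$, $a\ge1$, and $d\equiv\pm1\pmod{2^a}$.
   Context: A pair of positive integers $(n,d)$ with $d<n$ and $\gcd(n,d)=1$ is a critical pair if the Hirzebruch–Jung expansion $(a_0,\dots,a_r)$ of $n/d$ (defined by $\frac nd=a_0-1/(a_1-1/(\cdots-1/a_r))$, $a_i\ge2$) is symmetric ($a_i=a_{r-i}$ for all $i$), of odd length ($r$ even), and has even central term $a_{r/2}$. The pair $(1,1)$ is not critical. *)

(* Defs.v *)
From mathcomp Require Import all_boot all_order all_algebra.
Set Implicit Arguments. Unset Strict Implicit. Unset Printing Implicit Defensive.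
Import GRing.Theory Num.Theory.

Fixpoint hj_value (a0 : nat) (s : seq nat) : rat :=
  match s with
  | [::] => (a0%:R)%R
  | a1 :: s' => (a0%:R - (hj_value a1 s')^-1)%R
  end.

Definition is_hj_expansion (n d : nat) (a0 : nat) (s : seq nat) : Prop :=
  all (fun a => 2 <= a) (a0 :: s) /\
  hj_value a0 s = ((n%:R : rat) / (d%:R : rat))%R.

(* Critical pair: 0 < d < n, gcd(n,d) = 1, and the HJ expansion
   (a0,...,ar) of n/d is symmetric, of odd length (r even), with even
   central term a_{r/2}.  Here r = size s. *)
Definition critical_pair (n d : nat) : Prop :=
  0 < d /\ d < n /\ coprime n d /\
  exists (a0 : nat) (s : seq nat),
    [/\ is_hj_expansion n d a0 s,
        rev (a0 :: s) = a0 :: s,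
        ~~ odd (size s)
      & ~~ odd (nth 0 (a0 :: s) (size s)./2)].

(* Main.v *)
Require Import Defs.
From mathcomp Require Import all_boot all_order all_algebra.
From mathcomp Require Import zify ring lra.
Import Order.TTheory GRing.Theory Num.Theory.
Record m2 := M2 { e11 : int; e12 : int; e21 : int; e22 : int }.

Lemma nt (n d : nat) : 0 < n -> 0 < d ->
 ((~~ odd n /\ exists k, d^2 = 1 + 2*n*k) <->
  [/\ d ^ 2 = 1 %[mod n], 1 <= logn 2 n &
     (d = 1 %[mod 2 ^ logn 2 n] \/ d + 1 = 0 %[mod 2 ^ logn 2 n])]).
Proof.
move=> n0 d0; have [m cm en] := pfactor_coprime (isT : prime 2) n0.
move: en; set a := logn 2 n => en.
rewrite coprime2n in cm.
split.
- case=> ne [k ek].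
  case: a en => [|b] en.
    by move: ne; rewrite en expn0 muln1 cm.
  rewrite expnS in en *.
  split => //.
    by rewrite ek (_ : 1 + 2 * n * k = 2 * k * n + 1) ?modnMDl //; ring.
  have od : d %% 2 = 1.
    have : odd d by move: (congr1 odd ek); rewrite oddX /= => ->; rewrite oddD !oddM.
    by rewrite modn2 => ->.
  have [x ex] : exists x, d = 2 * x + 1 by exists (d %/ 2); lia.
  set P := 2 ^ b in en *.
  have exx : x * (x + 1) = m * P * k by move: ek; rewrite ex en; lia.
  have hdv : P %| x * (x + 1) by rewrite exx -mulnA (mulnC P) mulnA dvdn_mull.
  case ox: (odd x).
  + right.
    move: hdv; rewrite Gauss_dvdr; last by rewrite coprimeXl // coprime2n.
    case/dvdnP => y ey.
    have -> : d + 1 = y * (2 * P) by lia.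
    by rewrite modnMl mod0n.
  + left.
    move: hdv; rewrite Gauss_dvdl; last by rewrite coprimeXl // coprime2n oddD ox.
    case/dvdnP => y ey.
    have -> : d = y * (2 * P) + 1 by lia.
    by rewrite modnMDl.
- case=> hmod a1 hpm.
  case: a a1 en hpm => [|b] // _ en hpm.
  rewrite expnS in en hpm; set P := 2 ^ b in en hpm.
  have ne : ~~ odd n.
    rewrite (_ : n = 2 * (m * P)) ?oddM //; rewrite en; ring.
  split => //.
  move/eqP: hmod; rewrite eqn_mod_dvd ?expn_gt0 ?d0 // => hdv.
  have h2 : 2 * (2 * P) %| d ^ 2 - 1.
    case: hpm => [h|h].
    + move/eqP: h; rewrite eqn_mod_dvd // => /dvdnP [y ey].
      apply/dvdnP; exists (y * (y * P + 1)).
      have -> : d = y * (2 * P) + 1 by lia.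
      have -> : (y * (2 * P) + 1) ^ 2 = y * (y * P + 1) * (2 * (2 * P)) + 1 by ring.
      by rewrite addnK.
    + have : 2 * P %| d + 1 by rewrite /dvdn; apply/eqP; rewrite h mod0n.
      case/dvdnP => y ey.
      apply/dvdnP; exists (y * (y * P - 1)).
      have [z ez] : exists z, y * P = z + 1 by exists (y * P - 1); lia.
      have -> : d = 2 * z + 1 by lia.
      have -> : y * (y * P - 1) * (2 * (2 * P)) = 4 * (y * P) * (y * P - 1) by ring.
      rewrite ez addnK.
      have -> : (2 * z + 1) ^ 2 = 4 * (z + 1) * z + 1 by ring.
      by rewrite addnK.
  have hm : m * (2 * (2 * P)) %| d ^ 2 - 1.
    rewrite Gauss_dvd; last by rewrite (_ : 2 * (2 * P) = 2 ^ b.+2) ?coprimeXr ?coprimen2 // /P !expnS.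
    by rewrite h2 andbT (dvdn_trans _ hdv) // en dvdn_mulr.
  case/dvdnP: hm => k ek; exists k.
  have hD : 0 < d ^ 2 by rewrite expn_gt0 d0.
  have e3 : 2 * n * k = k * (m * (2 * (2 * P))) by rewrite en; ring.
  by rewrite e3 -ek subnKC.
Qed.

Local Open Scope ring_scope.

Definition mmul (A B : m2) : m2 :=
  M2 (e11 A * e11 B + e12 A * e21 B) (e11 A * e12 B + e12 A * e22 B)
     (e21 A * e11 B + e22 A * e21 B) (e21 A * e12 B + e22 A * e22 B).
Definition Mt (a : nat) := M2 (Posz a) (-1) 1 0.
Definition m1 := M2 1 0 0 1.
Fixpoint F (l : seq nat) : m2 :=
  match l with [::] => m1 | a :: l' => mmul (Mt a) (F l') end.

Lemma mmulA A B C : mmul A (mmul B C) = mmul (mmul A B) C.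
Proof. case: A B C => [? ? ? ?] [? ? ? ?] [? ? ? ?]; rewrite /mmul /=; f_equal; ring. Qed.
Lemma mmul1m A : mmul m1 A = A.
Proof. case: A => ????; rewrite /mmul /=; f_equal; ring. Qed.
Lemma mmulm1 A : mmul A m1 = A.
Proof. case: A => ????; rewrite /mmul /=; f_equal; ring. Qed.

Lemma F_cat l1 l2 : F (l1 ++ l2) = mmul (F l1) (F l2).
Proof. elim: l1 => [|a l IH] /=; first by rewrite mmul1m. by rewrite IH mmulA. Qed.

Lemma F_rcons l a : F (rcons l a) = mmul (F l) (Mt a).
Proof. by rewrite -cats1 F_cat /= mmulm1. Qed.

Definition tr (A : m2) := M2 (e11 A) (- e21 A) (- e12 A) (e22 A).

Lemma F_rev l : F (rev l) = tr (F l).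
Proof.
elim: l => [|a l IH] /=; first by rewrite /tr /m1 /= oppr0.
rewrite rev_cons F_rcons IH; case: (F l) => ????; rewrite /tr /mmul /=; f_equal; ring.
Qed.

Lemma F_det l : e11 (F l) * e22 (F l) - e12 (F l) * e21 (F l) = 1.
Proof.
elim: l => [|a l IH] /=; first by rewrite /=; ring.
move: IH; case: (F l) => p q r t /= IH. lia.
Qed.

Lemma F_bnd l : all (fun a => (2 <= a)%N) l -> 0 <= e21 (F l) < e11 (F l).
Proof.
elim: l => [|a l IH] //= /andP [ha hl].
move: (IH hl); case: (F l) => p q r t /= h. nia.
Qed.

Lemma F_bnd1 a l : all (fun a => (2 <= a)%N) (a :: l) -> 1 <= e21 (F (a :: l)) < e11 (F (a :: l)).
Proof.
move=> h; have := @F_bnd _ h; move: h => /= /andP [ha /(@F_bnd _)].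
case: (F l) => p q r t /=. nia.
Qed.

Lemma F_val a0 s : all (fun a => (2 <= a)%N) (a0 :: s) ->
  hj_value a0 s = (e11 (F (a0 :: s)))%:~R / (e21 (F (a0 :: s)))%:~R.
Proof.
elim: s a0 => [|a1 s IH] a0 h.
  rewrite /= !mulr1 !mulr0 !addr0.
  by [].
have h1 : all (fun a => (2 <= a)%N) (a1 :: s) by move: h => /= /andP [].
rewrite /= (IH a1 h1).
have := @F_bnd1 _ _ h1; move: h1 => _ /=.
case: (F s) => p q r t /= hb.
set X := a1%:Z * p + -1 * r; set Y := 1 * p + 0 * r.
have -> : 1 * X + 0 * Y = X by ring.
have -> : a0%:Z * X + -1 * Y = a0%:Z * X - Y by ring.
have hX : (X%:~R : rat) != 0 by rewrite intr_eq0; lia.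
have hY : (Y%:~R : rat) != 0 by rewrite intr_eq0; lia.
rewrite intrB intrM.
have -> : ((a0%:Z)%:~R : rat) = a0%:R by [].
by rewrite invf_div mulrBl mulfK.
Qed.

Lemma hj_bnd a0 s : all (fun a => (2 <= a)%N) (a0 :: s) ->
  (a0%:R - 1 < hj_value a0 s <= a0%:R) /\ (s != [::] -> hj_value a0 s < a0%:R).
Proof.
elim: s a0 => [|a1 s IH] a0 h.
  by rewrite /= lexx andbT; split => //; lra.
have h1 : all (fun a => (2 <= a)%N) (a1 :: s) by move: h => /= /andP [].
have [/andP [lo hi] _] := IH a1 h1.
have h2 : (2%:R : rat) <= a1%:R by rewrite ler_nat; move: h1 => /= /andP [].
set v := hj_value a1 s in lo hi *.
have v1 : 1 < v by lra.
have v0 : 0 < v by lra.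
have i0 : 0 < v^-1 by rewrite invr_gt0.
have i1 : v^-1 < 1 by rewrite invf_lt1.
rewrite /=; fold v.
split; last by move=> _; lra.
apply/andP; split; lra.
Qed.

Lemma hj_uniq s a0 b0 s' : all (fun a => (2 <= a)%N) (a0 :: s) ->
  all (fun a => (2 <= a)%N) (b0 :: s') -> hj_value a0 s = hj_value b0 s' ->
  a0 :: s = b0 :: s'.
Proof.
elim: s a0 b0 s' => [|a1 s IH] a0 b0 s' ha hb e.
- have [/andP [la ua] _] := @hj_bnd _ _ ha; have [/andP [lb ub] sb] := @hj_bnd _ _ hb.
  have ab : a0 = b0.
    apply/eqP; rewrite eqn_leq; apply/andP; split.
      have : (a0%:R : rat) < b0.+1%:R by rewrite -addn1 natrD; lra.
      by rewrite ltr_nat ltnS.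
    have : (b0%:R : rat) < a0.+1%:R by rewrite -addn1 natrD; lra.
    by rewrite ltr_nat ltnS.
  subst b0; case: s' hb e sb {lb ub} => [|b1 s'] hb e sb //.
  by move: (sb isT); rewrite -e /= ltxx.
- have [/andP [la ua] sa] := @hj_bnd _ _ ha; have [/andP [lb ub] sb] := @hj_bnd _ _ hb.
  have ab : a0 = b0.
    apply/eqP; rewrite eqn_leq; apply/andP; split.
      have : (a0%:R : rat) < b0.+1%:R by rewrite -addn1 natrD; lra.
      by rewrite ltr_nat ltnS.
    have : (b0%:R : rat) < a0.+1%:R by rewrite -addn1 natrD; lra.
    by rewrite ltr_nat ltnS.
  subst b0; case: s' hb e sb {lb ub} => [|b1 s'] hb e sb.
    by move: (sa isT); rewrite e /= ltxx.
  have ha1 : all (fun a => (2 <= a)%N) (a1 :: s) by move: ha => /= /andP [].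
  have hb1 : all (fun a => (2 <= a)%N) (b1 :: s') by move: hb => /= /andP [].
  move: e => /= /addrI /oppr_inj /invr_inj e.
  by rewrite (IH a1 b1 s' ha1 hb1 e).
Qed.

Lemma hj_exists d n : (0 < d < n)%N -> exists a0 s,
  all (fun a => (2 <= a)%N) (a0 :: s) /\ hj_value a0 s = n%:R / d%:R.
Proof.
elim: d {-2}d (leqnn d) n => [|D IH] d hd n /andP [d0 dn]; first by lia.
have en := divn_eq n d.
set q := (n %/ d)%N in en *; set r := (n %% d)%N in en *.
have rd : (r < d)%N by rewrite /r ltn_mod d0.
have hd0 : (d%:R : rat) != 0 by rewrite pnatr_eq0 -lt0n.
case: (posnP r) => r0.
- exists q, [::]; split; first by rewrite /= andbT; nia.
  by rewrite /= en r0 addn0 natrM mulfK.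
- have [b0 [s' [hb e]]] := IH (d - r)%N ltac:(lia) d ltac:(lia).
  exists q.+1, (b0 :: s'); split; first by move: hb => /= ->; rewrite andbT; nia.
  rewrite /= e invf_div en natrB ?(ltnW rd) // natrD natrM -addn1 natrD.
  by field.
Qed.

Lemma match_nd a0 s n d : all (fun a => (2 <= a)%N) (a0 :: s) ->
  hj_value a0 s = n%:R / d%:R -> (0 < d)%N -> coprime n d ->
  e11 (F (a0 :: s)) = n%:Z /\ e21 (F (a0 :: s)) = d%:Z.
Proof.
move=> ha e d0 cnd.
have hb := @F_bnd1 _ _ ha; have hdet := F_det (a0 :: s).
rewrite (@F_val _ _ ha) in e.
move: hb hdet e; set p := e11 _; set r := e21 _; set q := e12 _; set t := e22 _.
move=> hb hdet e.
have hr : (r%:~R : rat) != 0 by rewrite intr_eq0; lia.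
have hd : (d%:R : rat) != 0 by rewrite pnatr_eq0; lia.
move/eqP: e; rewrite eqr_div // => /eqP e.
have e' : p * d%:Z = n%:Z * r.
  apply/eqP; rewrite -(eqr_int rat) !intrM; exact/eqP.
have [P eP] : exists P : nat, p = P%:Z by exists `|p|%N; lia.
have [R eR] : exists R : nat, r = R%:Z by exists `|r|%N; lia.
rewrite eP eR in e' hb hdet *.
have e2 : (P * d = n * R)%N by lia.
have : (n %| P * d)%N by rewrite e2 dvdn_mulr.
rewrite Gauss_dvdl // => /dvdnP [K eK].
have n0 : (0 < n)%N by lia.
have eR2 : R = (K * d)%N.
  apply/eqP; rewrite -(eqn_pmul2l n0); apply/eqP; rewrite -e2 eK; ring.
rewrite eK eR2 in hdet hb *.
have h : K%:Z * (n%:Z * t - q * d%:Z) = 1 by rewrite -hdet !PoszM; ring.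
have K0 : (0 < K)%N by move: hb; rewrite PoszM; nia.
move: h; set X := (_ - _) => h.
have X1 : 0 < X.
  rewrite ltNge; apply/negP => hX.
  have : K%:Z * X <= 0 by rewrite pmulr_rle0 //; lia.
  lia.
have : (K%:Z <= K%:Z * X) by rewrite ler_pMr //; lia.
rewrite h => KK.
have K1 : K = 1%N by lia.
by rewrite K1 !mul1n.
Qed.

Lemma F_odd A c : let M := F A in
  e11 (F (A ++ c :: rev A)) = c%:Z * e11 M ^+ 2 + 2 * e11 M * e12 M /\
  e22 (F (A ++ c :: rev A)) = - (c%:Z * e21 M ^+ 2 + 2 * e21 M * e22 M).
Proof. rewrite /= F_cat /= F_rev; case: (F A) => ????; rewrite /tr /mmul /=; split; ring. Qed.

Lemma F_even A : let M := F A in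
  e11 (F (A ++ rev A)) = e11 M ^+ 2 - e12 M ^+ 2 /\
  e22 (F (A ++ rev A)) = e22 M ^+ 2 - e21 M ^+ 2.
Proof. rewrite /= F_cat /= F_rev; case: (F A) => ????; rewrite /tr /mmul /=; split; ring. Qed.

Lemma pal_odd (l : seq nat) m : rev l = l -> size l = (2 * m + 1)%N ->
  l = take m l ++ nth 0%N l m :: rev (take m l).
Proof.
move=> hr hs.
have hm : (m < size l)%N by lia.
have e : l = take m l ++ nth 0%N l m :: drop m.+1 l by rewrite -drop_nth // cat_take_drop.
have e2 := hr; rewrite {1}e rev_cat rev_cons -cats1 -catA cat1s in e2.
have {}e2 := etrans e2 e.
move/eqP: e2; rewrite eqseq_cat; last by rewrite size_rev size_drop size_take hm hs; lia.
case/andP => /eqP e3 /eqP [e4].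
by rewrite {1}e -e3 revK.
Qed.

Lemma pal_even (l : seq nat) m : rev l = l -> size l = (2 * m)%N ->
  l = take m l ++ rev (take m l).
Proof.
move=> hr hs.
have e : l = take m l ++ drop m l by rewrite cat_take_drop.
have e2 := hr; rewrite {1}e rev_cat in e2.
have {}e2 := etrans e2 e.
move/eqP: e2; rewrite eqseq_cat; last by rewrite size_rev size_drop size_take hs; case: ltnP => h /=; lia.
case/andP => /eqP e3 /eqP e4.
by rewrite {1}e -e3 revK.
Qed.

Lemma par2 (x : int) : exists y, x = 2 * y \/ x = 2 * y + 1.
Proof. exists (x %/ 2)%Z; lia. Qed.

Lemma par_even (a b c d j k : int) : a * d - b * c = 1 -> a ^+ 2 - b ^+ 2 = 2 * j ->
  d ^+ 2 - c ^+ 2 = 2 * k -> False.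
Proof.
rewrite !expr2.
have [a' [->|->]] := par2 a; have [b' [->|->]] := par2 b;
have [c' [->|->]] := par2 c; have [d' [->|->]] := par2 d; lia.
Qed.

Lemma par_odd (e a b c d j k : int) : a * d - b * c = 1 -> (2 * e + 1) * a ^+ 2 + 2 * a * b = 2 * j ->
  - ((2 * e + 1) * c ^+ 2 + 2 * c * d) = 2 * k -> False.
Proof.
rewrite !expr2.
have [a' [->|->]] := par2 a; have [b' [->|->]] := par2 b;
have [c' [->|->]] := par2 c; have [d' [->|->]] := par2 d; lia.
Qed.

Lemma crit_fwd n d : (1 <= d <= n)%N -> coprime n d -> critical_pair n d ->
  ~~ odd n /\ exists k, (d ^ 2 = 1 + 2 * n * k)%N.
Proof.
move=> /andP [d1 dn] cnd [d0 [dlt [_ [a0 [s [[ha e] hr hs hc]]]]]].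
have [en ed] := @match_nd _ _ _ _ ha e d0 cnd.
set l := a0 :: s in ha hr hc en ed.
have eq : e12 (F l) = - e21 (F l) by have := congr1 e12 (congr1 F hr); rewrite F_rev => <-.
rewrite ed in eq.
have hdet := F_det l; rewrite en ed eq in hdet.
have [m hm] : exists m, size s = (2 * m)%N by exists (size s)./2; rewrite -[LHS]odd_double_half (negbTE hs) add0n -mul2n.
have hsl : size l = (2 * m + 1)%N by rewrite /= hm addn1.
clearbody l.
have el := @pal_odd _ _ hr hsl.
have hm2 : (size s)./2 = m by rewrite hm mul2n doubleK.
rewrite hm2 in hc.
move: hc; set c := nth 0%N l m => hc.
have [c' ec] : exists c', c = (2 * c')%N by exists c./2; rewrite -[LHS]odd_double_half (negbTE hc) add0n -mul2n.
have [h1 h2] := F_odd (take m l) c; rewrite -el in h1 h2.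
rewrite en in h1; rewrite h2 in hdet.
move: h1 h2 hdet; rewrite ec.
set al := e11 (F (take m l)); set be := e12 (F (take m l)); set ga := e21 (F (take m l)); set de := e22 (F (take m l)).
move=> h1 h2 hdet.
split.
  rewrite -dvdn2; apply/dvdnP; exists `|(c'%:Z * al ^+ 2 + al * be)%R|%N.
  move: h1; rewrite PoszM !expr2; nia.
set K := c'%:Z * ga ^+ 2 + ga * de.
have hK : (d%:Z) * d%:Z = 1 + 2 * n%:Z * K.
  rewrite /K; move: hdet; rewrite !expr2 PoszM; lia.
have K0 : 0 <= K by nia.
exists `|K|%N.
have hK' : (d * d = 1 + 2 * n * `|K|)%N by lia.
by rewrite expnS expn1.
Qed.

Lemma crit_bwd n d : (1 <= d <= n)%N -> coprime n d -> ~~ odd n ->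
  (exists k, (d ^ 2 = 1 + 2 * n * k)%N) -> critical_pair n d.
Proof.
move=> /andP [d1 dn] cnd ne [k ek].
have dlt : (d < n)%N.
  rewrite ltn_neqAle dn andbT; apply/eqP => edn.
  by move: cnd ne; rewrite edn /coprime gcdnn => /eqP ->.
have n0 : (0 < n)%N by lia.
have [a0 [s [ha e]]] := @hj_exists d n ltac:(lia).
have [en ed] := @match_nd _ _ _ _ ha e d1 cnd.
move: ha en ed; move El : (a0 :: s) => l ha en ed.
have lne : l <> [::] by rewrite -El.
have hrl : all (fun a => (2 <= a)%N) (rev l) by rewrite all_rev.
have Fr := F_rev l.
case erl : (rev l) hrl Fr => [|b0 s'] hrl Fr.
  by case: lne; rewrite -(revK l) erl.
have hb := @F_bnd1 _ _ hrl.
rewrite Fr /= en in hb.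
have hdet := F_det l; rewrite en ed in hdet.
move: hb hdet; set q := e12 (F l); set t := e22 (F l) => hb hdet.
have ek' : (d%:Z) * d%:Z = 1 + 2 * n%:Z * k%:Z.
  have : (d * d = 1 + 2 * n * k)%N by rewrite -ek expnS expn1.
  lia.
have qd : q = - d%:Z.
  set Q := - q.
  have eq : q = - Q by rewrite /Q opprK.
  rewrite eq in hdet hb *.
  have h3 : Q - d%:Z = n%:Z * (- (t * d%:Z + 2 * k%:Z * Q)).
    have h4 : n%:Z * (t * d%:Z + 2 * k%:Z * Q) = (n%:Z * t) * d%:Z + (2 * n%:Z * k%:Z) * Q by ring.
    have h5 : n%:Z * t = 1 - Q * d by lia.
    have h6 : 2 * n%:Z * k%:Z = d%:Z * d%:Z - 1 by lia.
    rewrite h5 h6 in h4.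
    lia.
  move: h3; set Y := - (t * _ + _) => h3.
  have Y0 : Y = 0 by nia.
  rewrite Y0 mulr0 in h3; lia.
have evr : hj_value b0 s' = n%:R / d%:R.
  by rewrite (@F_val _ _ hrl) Fr /= en -/q qd opprK.
have ha' : all (fun a => (2 <= a)%N) (a0 :: s) by rewrite El.
have erl2 := @hj_uniq _ _ _ _ hrl ha' (etrans evr (esym e)).
have hr : rev l = l by rewrite erl erl2 El.
have tk : t = - (2 * k%:Z).
  rewrite qd in hdet.
  have : n%:Z * (t + 2 * k%:Z) = 0 by lia.
  move/eqP; rewrite mulf_eq0 => /orP [/eqP|/eqP]; lia.
have [j ej] : exists j, n = (2 * j)%N by exists n./2; rewrite -[LHS]odd_double_half (negbTE ne) add0n -mul2n.
have hsl0 : size l = (size s).+1 by rewrite -El.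
have hs : ~~ odd (size s).
  apply/negP => os.
  have [m hm] : exists m, size l = (2 * m)%N.
    exists (size s).+1./2; rewrite hsl0 -[LHS]odd_double_half /= os /= add0n -mul2n.
    by rewrite uphalfE.
  have el := @pal_even _ _ hr hm.
  have [h1 h2] := F_even (take m l); rewrite -el in h1 h2.
  have hd := F_det (take m l).
  apply: (@par_even _ _ _ _ j%:Z (- k%:Z) hd).
    by rewrite -h1 en ej PoszM.
  by rewrite -h2 -/t tk; ring.
split => //; split => //; split => //; exists a0, s; split => //; first by rewrite El.
have [m hm] : exists m, size s = (2 * m)%N by exists (size s)./2; rewrite -[LHS]odd_double_half (negbTE hs) add0n -mul2n.
have hm2 : (size s)./2 = m by rewrite hm mul2n doubleK.
rewrite hm2 El.
have hsl : size l = (2 * m + 1)%N by rewrite hsl0 hm addn1.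
have el := @pal_odd _ _ hr hsl.
apply/negP => oc.
move: oc; set c := nth 0%N l m => oc.
have [c' ec] : exists c', c = (2 * c' + 1)%N by exists c./2; rewrite -[LHS]odd_double_half oc addnC -mul2n.
have [h1 h2] := F_odd (take m l) c; rewrite -el in h1 h2.
have hd := F_det (take m l).
apply: (@par_odd c'%:Z _ _ _ _ j%:Z (- k%:Z) hd).
  move: en; rewrite h1 ec ej; lia.
move: tk; rewrite /t h2 ec; lia.
Qed.


Local Close Scope ring_scope.

Theorem corollary1p8 (n d : nat) :
  1 <= d <= n -> coprime n d ->
  (critical_pair n d <->
     [/\ d ^ 2 = 1 %[mod n],
         1 <= logn 2 n
       & (d = 1 %[mod 2 ^ logn 2 n] \/ d + 1 = 0 %[mod 2 ^ logn 2 n])]).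
Proof.
move=> hd cnd.
have d1 : 0 < d by case/andP: hd.
have n0 : 0 < n by case/andP: hd => ? ?; apply: leq_trans d1 _.
split.
- by move=> hc; apply/(nt n d n0 d1); exact: crit_fwd.
- by move/(nt n d n0 d1) => [ne hk]; exact: crit_bwd.
Qed.
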